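(* Let $m\ge 2$ be even, $n\ge1$, and let $\mathcal{T}=(t_{i_1\cdots i_m})\in\mathbb{R}^{[m,n]}$ be a Nekrasov $Z$ tensor with all diagonal elements $t_{i\cdots i}>0$. Let $$W=\mathrm{diag}(w_1,\dots,w_n),\qquad w_i=\Big(\frac{\Lambda_i(\mathcal{T})}{t_{i i\cdots i}}\Big)^{\frac{1}{m-1}}.$$ Then the tensor $\mathcal{T}W=(b_{i_1\cdots i_m})$, with entries $b_{i_1 i_2\cdots i_m}=t_{i_1 i_2\cdots i_m}w_{i_2}\cdots w_{i_m}$, is a diagonally dominant $Z$ tensor, i.e. all its off-diagonal entries are nonpositive and $|b_{i\cdots i}|\ge\sum_{(i_2,\dots,i_m)\neq(i,\dots,i)}|b_{i i_2\cdots i_m}|$ for all $i\in[n]$.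
   Context: $[n]=\{1,\dots,n\}$ and $\mathbb{R}^{[m,n]}$ denotes the set of real tensors $\mathcal{T}=(t_{i_1\cdots i_m})$ with $i_1,\dots,i_m\in[n]$. A diagonal element is $t_{i\cdots i}$; all other entries are off-diagonal. $\mathcal{T}$ is a $Z$ tensor if all its off-diagonal entries are nonpositive. For $\mathcal{T}$ with $t_{i\cdots i}\neq 0$ for all $i$, define $R_i(\mathcal{T})=\sum_{(i_2,\dots,i_m)\neq(i,\dots,i)}|t_{i i_2\cdots i_m}|$, $\Lambda_1(\mathcal{T})=R_1(\mathcal{T})$, and for $i=2,\dots,n$ $$\Lambda_i(\mathcal{T})=\sum_{(i_2,\dots,i_m)\in[i-1]^{m-1}}|t_{i i_2\cdots i_m}|\Big(\tfrac{\Lambda_{i_2}(\mathcal{T})}{|t_{i_2\cdots i_2}|}\Big)^{\frac{1}{m-1}}\cdots\Big(\tfrac{\Lambda_{i_m}(\mathcal{T})}{|t_{i_m\cdots i_m}|}\Big)^{\frac{1}{m-1}}+\sum_{(i_2,\dots,i_m)\notin[i-1]^{m-1},\ (i_2,\dots,i_m)\neq(i,\dots,i)}|t_{i i_2\cdots i_m}|.$$ $\mathcal{T}$ is a Nekrasov tensor if $|t_{i\cdots i}|>\Lambda_i(\mathcal{T})$ for all $i\in[n]$; a Nekrasov $Z$ tensor is one that is both a Nekrasov tensor and a $Z$ tensor. A tensor $\mathcal{B}=(b_{i_1\cdots i_m})$ is diagonally dominant if $|b_{i\cdots i}|\ge\sum_{(i_2,\dots,i_m)\neq(i,\dots,i)}|b_{i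 i_2\cdots i_m}|$ for every $i$. The product $\mathcal{T}W$ of a tensor with a diagonal matrix is the general tensor product of Shao, which here gives the entry formula stated in the claim. *)

(* Defs.v *)
From HB Require Import structures.
From mathcomp Require Import all_boot all_order all_algebra.
From mathcomp Require Import reals exp.
Set Implicit Arguments. Unset Strict Implicit. Unset Printing Implicit Defensive.
Import Order.TTheory GRing.Theory Num.Theory.
Local Open Scope ring_scope.

(* An order-m, dimension-n real tensor T = (t_{i1 i2 ... im}) is represented
   curried in its first index: T i1 tl = t_{i1 tl(0) ... tl(m-2)}, where the
   tail tl : {ffun 'I_(m.-1) -> 'I_n} lists (i2,...,im). Indices are 0-based. *)
Definition tail_t (m n : nat) := {ffun 'I_m.-1 -> 'I_n}.
Definition tensor (R : Type) (m n : nat) := 'I_n -> tail_t m n -> R.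

Definition dtail (m n : nat) (i : 'I_n) : tail_t m n := [ffun _ => i].

Definition Z_tensor (R : realType) (m n : nat) (T : tensor R m n) : Prop :=
  forall (i : 'I_n) (tl : tail_t m n), tl != dtail m i -> T i tl <= 0.

Definition root_m (R : realType) (m : nat) (x : R) : R := powR x (m.-1%:R)^-1.

(* one step of the recursion: Lambda_i computed from prev, the values
   Lambda_j for j < i (values of prev at j >= i are not used). *)
Definition Lam_step (R : realType) (m n : nat) (T : tensor R m n)
    (prev : 'I_n -> R) (i : 'I_n) : R :=
  \sum_(tl : tail_t m n | tl != dtail m i)
     if [forall k, (tl k < i)%N] then
       `|T i tl| * \prod_(k < m.-1) root_m m (prev (tl k) / `|T (tl k) (dtail m (tl k))|)
     else `|T i tl|.

(* LamUpTo k j = Lambda_j for every j < k *)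
Fixpoint LamUpTo (R : realType) (m n : nat) (T : tensor R m n) (k : nat) : 'I_n -> R :=
  match k with
  | 0 => fun _ => 0
  | k'.+1 => fun i => if (i < k')%N then LamUpTo T k' i else Lam_step T (LamUpTo T k') i
  end.

(* Lambda_i(T) of the paper (0-based index i); Lambda_0 = R_0(T). *)
Definition Lambda (R : realType) (m n : nat) (T : tensor R m n) (i : 'I_n) : R :=
  LamUpTo T i.+1 i.

Definition Nekrasov (R : realType) (m n : nat) (T : tensor R m n) : Prop :=
  forall i : 'I_n, T i (dtail m i) != 0 /\ Lambda T i < `|T i (dtail m i)|.

Definition diag_dominant (R : realType) (m n : nat) (B : tensor R m n) : Prop :=
  forall i : 'I_n,
    \sum_(tl : tail_t m n | tl != dtail m i) `|B i tl| <= `|B i (dtail m i)|.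

Definition nek_weight (R : realType) (m n : nat) (T : tensor R m n) (i : 'I_n) : R :=
  root_m m (Lambda T i / T i (dtail m i)).

Definition tensor_mul_diag (R : realType) (m n : nat) (T : tensor R m n)
    (w : 'I_n -> R) : tensor R m n :=
  fun i tl => T i tl * \prod_(k < m.-1) w (tl k).

(* Main.v *)
Require Import Defs.
From HB Require Import structures.
From mathcomp Require Import all_boot all_order all_algebra.
From mathcomp Require Import reals exp.
Import Order.TTheory GRing.Theory Num.Theory.
Local Open Scope ring_scope.

Lemma LamUpTo_stable (R : realType) (m n : nat) (T : tensor R m n) (j : 'I_n) d :
  LamUpTo T (j.+1 + d) j = Lambda T j.
Proof.
elim: d => [|d IH]; first by rewrite addn0.
rewrite addnS.
change (LamUpTo T (j.+1 + d).+1 j) with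
  (if (j < j.+1 + d)%N then LamUpTo T (j.+1 + d) j else Lam_step T (LamUpTo T (j.+1 + d)) j).
by rewrite ltnS leq_addr IH.
Qed.

Lemma LamUpTo_lt (R : realType) (m n : nat) (T : tensor R m n) (j : 'I_n) k :
  (j < k)%N -> LamUpTo T k j = Lambda T j.
Proof. by move=> jk; rewrite -(subnKC jk) LamUpTo_stable. Qed.

Lemma Lambda_step (R : realType) (m n : nat) (T : tensor R m n) (i : 'I_n) :
  Lambda T i = Lam_step T (LamUpTo T i) i.
Proof. by rewrite /Lambda /= ltnn. Qed.

Lemma Lambda_ge0 (R : realType) (m n : nat) (T : tensor R m n) (i : 'I_n) :
  0 <= Lambda T i.
Proof.
rewrite Lambda_step /Lam_step; apply: sumr_ge0 => tl _.
case: ifP => _ //; apply: mulr_ge0 => //; apply: prodr_ge0 => k _.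
exact: powR_ge0.
Qed.


Lemma w1 (R : realType) (m n : nat) (T : tensor R m n) (m2 : (2 <= m)%N) (HN : Nekrasov T) (Hpos : forall i : 'I_n, 0 < T i (dtail m i)) j : nek_weight T j <= 1.
Proof.
  rewrite /nek_weight /root_m.
  have [_ lt] := HN j; rewrite gtr0_norm ?Hpos // in lt.
  apply: (@le_trans _ _ ((1:R) `^ (m.-1%:R)^-1)); last by rewrite powR1.
  apply: (ge0_ler_powR (r := (m.-1%:R)^-1)).
  - by rewrite invr_ge0 ler0n.
  - by rewrite nnegrE; apply: divr_ge0; [exact: Lambda_ge0 | exact: ltW].
  - by rewrite nnegrE ler01.
  - by rewrite ler_pdivrMr ?Hpos // mul1r ltW.
Qed.

Lemma diag_eq (R : realType) (m n : nat) (T : tensor R m n) (m2 : (2 <= m)%N) (HN : Nekrasov T) (Hpos : forall i : 'I_n, 0 < T i (dtail m i)) i : `|T i (dtail m i) * \prod_(k < m.-1) nek_weight T (dtail m i k)| = Lambda T i.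
Proof.
  rewrite (eq_bigr (fun=> nek_weight T i)); last by move=> k _; rewrite ffunE.
  rewrite prodr_const card_ord /nek_weight /root_m -powR_mulrn; last exact: powR_ge0.
  rewrite -powRrM mulVf ?pnatr_eq0 -?lt0n; last by case: (m) m2 => [|[|]].
  rewrite powRr1; last by apply: divr_ge0; [exact: Lambda_ge0 | exact: ltW].
  rewrite mulrCA divff ?mulr1 ?gt_eqF ?Hpos //.
  by rewrite ger0_norm ?Lambda_ge0.
Qed.

Theorem mainTheorem2 (R : realType) (m n : nat) (T : tensor R m n) :
  (2 <= m)%N -> ~~ odd m -> (1 <= n)%N ->
  Z_tensor T -> Nekrasov T ->
  (forall i : 'I_n, 0 < T i (dtail m i)) ->
  Z_tensor (tensor_mul_diag T (nek_weight T)) /\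
  diag_dominant (tensor_mul_diag T (nek_weight T)).
Proof.
move=> m2 _ _ HZ HN Hpos.
have w0 : forall j, 0 <= nek_weight T j by move=> j; exact: powR_ge0.
have pw0 : forall tl : tail_t m n, 0 <= \prod_(k < m.-1) nek_weight T (tl k).
  by move=> tl; apply: prodr_ge0 => k _.
split.
  move=> i tl Htl; rewrite /tensor_mul_diag.
  by apply: mulr_le0_ge0; [exact: HZ|exact: pw0].
move=> i; rewrite /tensor_mul_diag (@diag_eq _ _ _ _ m2 HN Hpos).
rewrite Lambda_step /Lam_step; apply: ler_sum => tl _.
rewrite normrM (ger0_norm (pw0 tl)).
case: ifP => [/forallP Hall | _].
  rewrite le_eqVlt; apply/orP; left; apply/eqP; congr (_ * _); apply: eq_bigr => k _.
  by rewrite /nek_weight (@LamUpTo_lt _ _ _ _ _ _ (Hall k)) gtr0_norm ?Hpos.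
rewrite -[leRHS]mulr1; apply: ler_wpM2l => //.
by apply: prodr_ile1 => k _; rewrite w0 (@w1 _ _ _ _ m2 HN Hpos).
Qed.
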